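(* For every real $\alpha>0$ the series $\sum_{k=1}^{+\infty}\left(p^{(k)}_k\right)^{-\alpha}$ converges.
   Context: Let $p_n$ denote the $n$-th prime number. Define $p^{(0)}_n=n$ and recursively $p^{(k+1)}_n=p_{p^{(k)}_n}$ for $k\in\mathbb N_0$. *)

(* Defs.v *)
From mathcomp Require Import ssreflect ssrfun ssrbool eqtype ssrnat prime.

Lemma next_prime_ex (m : nat) : exists p, (m < p) && prime p.
Proof. case: (prime_above m) => p Hp Hpr; exists p; by rewrite Hp Hpr. Qed.

Definition next_prime (m : nat) : nat := ex_minn (next_prime_ex m).

(* nth_prime n = p_n, the n-th prime, 1-indexed: p_1 = 2, p_2 = 3, ...
   (nth_prime 0 = 0 is a dummy value, never used below) *)
Fixpoint nth_prime (n : nat) : nat :=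
  match n with
  | 0 => 0
  | S n' => next_prime (nth_prime n')
  end.

(* iter_prime k n = p^{(k)}_n : p^{(0)}_n = n, p^{(k+1)}_n = p_{p^{(k)}_n} *)
Fixpoint iter_prime (k n : nat) : nat :=
  match k with
  | 0 => n
  | S k' => nth_prime (iter_prime k' n)
  end.

(* Main.v *)
Require Import Defs.
From Stdlib Require Import Reals Lia Lra Psatz.
From Coquelicot Require Import Coquelicot.
From mathcomp Require Import ssreflect ssrfun ssrbool eqtype ssrnat div prime.
From mathcomp Require Import zify.

Open Scope nat_scope.
Lemma next_primeP (m : nat) : (m < next_prime m) && prime (next_prime m).
Proof. rewrite /next_prime. by case: ex_minnP. Qed.

Lemma nth_prime_prime (n : nat) : (0 < n)%N -> prime (nth_prime n).
Proof. case: n => // n _ /=. by case/andP: (next_primeP (nth_prime n)). Qed.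

Lemma nth_prime_ge (n : nat) : (2 * n <= nth_prime n + 1)%N.
Proof.
elim: n => [|n IH] //=.
have /andP[lt pr] := next_primeP (nth_prime n).
case: n IH lt pr => [|n] IH lt pr.
  move: lt; rewrite /=; lia.
have pp := nth_prime_prime (n.+1) isT.
set p := nth_prime n.+1 in IH lt pr pp *.
set q := next_prime p in lt pr *.
have [h|h] := leqP (2 * n.+1) p; first lia.
have ep : p = (2 * n.+1).-1 by lia.
have [h2|h2] := leqP (2 * n.+2) (q + 1); first done.
have eq : q = 2 * n.+1 by lia.
have d2 : (2 %| q)%N by rewrite eq dvdn_mulr.
have := prime_nt_dvdP pr (isT : 2 != 1) d2.
have := prime_gt1 pp. lia.
Qed.

Lemma iter_ge (k n : nat) : (0 < n)%N -> (2 ^ k * (n - 1) + 1 <= iter_prime k n)%N.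
Proof.
move=> n0; elim: k => [|k IH] /=; first lia.
have := nth_prime_ge (iter_prime k n).
rewrite expnS -mulnA. lia.
Qed.

Lemma term_ge (j : nat) : (2 ^ j <= iter_prime j.+1 j.+1)%N.
Proof.
have := iter_ge j.+1 j.+1 isT.
rewrite expnS subSS.
case: j => [|j]; first by rewrite /=; lia.
have : (2 ^ j.+1 <= 2 ^ j.+1 * j.+1)%N by rewrite leq_pmulr.
lia.
Qed.

Open Scope R_scope.

Theorem theorem13 (alpha : R) (Halpha : 0 < alpha) :
  ex_series (fun j : nat => Rpower (INR (iter_prime (S j) (S j))) (- alpha)).
Proof.
set r := Rpower 2 (- alpha).
have r0 : 0 < r by apply: exp_pos.
have r1 : r < 1.
  rewrite /r /Rpower -exp_0; apply: exp_increasing.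
  have := ln_lt_2 => ?; nra.
apply: (ex_series_le _ (fun n => r ^ n)); last first.
  apply: ex_series_geom; rewrite Rabs_pos_eq; [exact: r1 | exact: Rlt_le].
move=> n.
have h := term_ge n.
have h2 : (2 ^ n <= INR (iter_prime n.+1 n.+1)).
  rewrite -(pow_INR 2 n). apply: le_INR. have -> : Nat.pow 2 n = (2 ^ n)%N by elim: (n) => // m IH; rewrite expnS -IH. by apply/leP.
have p2 : 0 < 2 ^ n by apply: pow_lt; lra.
set a := INR (iter_prime n.+1 n.+1) in h2 *.
have -> : norm (Rpower a (- alpha)) = Rpower a (- alpha).
  rewrite /norm /= /abs /= Rabs_pos_eq //; apply: Rlt_le; apply: exp_pos.
have -> : r ^ n = exp (- alpha * (INR n * ln 2)).
  rewrite -(Rpower_pow n r) // /r Rpower_mult /Rpower; f_equal; ring.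
rewrite /Rpower.
have hl : ln (exp (INR n * ln 2)) <= ln a.
  apply: ln_le; first by apply: exp_pos.
  rewrite -/(Rpower 2 (INR n)) Rpower_pow; lra.
rewrite ln_exp in hl.
have hh : (-alpha * ln a) <= (- alpha * (INR n * ln 2)) by nra.
case: (Rle_lt_or_eq_dec _ _ hh) => e.
  by apply: Rlt_le; apply: exp_increasing; lra.
right. by rewrite e.
Qed.
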